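(* Let $\mathcal{P}$ be a collection of cells and let $[a,b]$ and $[\alpha,\beta]$ be two inner intervals of $\mathcal{P}$, where $c,d$ are the anti-diagonal corners of $[a,b]$ and $\gamma,\delta$ are the anti-diagonal corners of $[\alpha,\beta]$. Suppose $|\{a,b,c,d\}\cap\{\alpha,\beta,\gamma,\delta\}|=2$. Then for every $\mathsf{P}$-order $<^{\mathsf{P}}$ on $V(\mathcal{P})$, the $S$-polynomial $S(f_{a,b},f_{\alpha,\beta})$ reduces to $0$ modulo $\mathcal{G}$ with respect to $<^{\mathsf{P}}_{\mathrm{lex}}$.
   Context: For $a=(i,j), b=(k,l)\in\mathbb{Z}^2$ with $a\le b$ componentwise, the interval $[a,b]=\{(m,n)\in\mathbb{Z}^2: i\le m\le k,\ j\le n\le l\}$; it is proper if $i<k$ and $j<l$, in which case $a,b$ are its diagonal corners and $c=(i,l)$ (upper left), $d=(k,j)$ (lower right) its anti-diagonal corners. A cell is a proper interval $[v,v+(1,1)]$; its vertices are its four corners. A collection of cells $\mathcal{P}$ is a nonempty finite set of cells; $V(\mathcal{P})$ is the set of all vertices of its cells. A proper interval $[a,b]$ is an inner interval of $\mathcal{P}$ if every cell $[v,v+(1,1)]\subseteq[a,b]$ belongs to $\mathcal{P}$. Let $K$ be a field and $S=K[x_v: v\in V(\mathcal{P})]$. For an inner interval $[a,b]$ with anti-diagonal corners $c$ (upper left), $d$ (lower right), put $f_{a,b}=x_ax_b-x_cx_d$ (an inner 2-minor); $\mathcal{G}$ is the set of all inner 2-minors of $\mathcal{P}$. A $\mathsf{P}$-order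 is a total order $<^{\mathsf{P}}$ on $V(\mathcal{P})$; $<^{\mathsf{P}}_{\mathrm{lex}}$ denotes the lexicographic monomial order on $S$ induced by the variable order $x_u<x_v \iff u<^{\mathsf{P}}v$. $S(f,g)$ denotes the $S$-polynomial with respect to this order. *)

(* Defs.v *)
From HB Require Import structures.
From mathcomp Require Import all_boot all_order all_algebra.
From mathcomp Require Import mpoly.

Set Implicit Arguments.
Unset Strict Implicit.
Unset Printing Implicit Defensive.

Import Order.TTheory GRing.Theory Num.Theory.
Local Open Scope ring_scope.

Notation pt := (int * int)%type.

(* A cell [v, v+(1,1)] is represented by its lower-left corner v.
   A collection of cells P is represented by the (finite) list of the
   lower-left corners of its cells. *)

Definition cell_vertices (v : pt) : seq pt :=
  [:: v; (v.1 + 1, v.2); (v.1, v.2 + 1); (v.1 + 1, v.2 + 1)].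

Definition VP (P : seq pt) : seq pt := undup (flatten (map cell_vertices P)).

Definition nV (P : seq pt) : nat := size (VP P).

(* The polynomial ring S = K[x_v : v in V(P)]: variable x_v is 'X_i where
   i is the position of v in VP P. *)
Definition Sring (K : fieldType) (P : seq pt) := {mpoly K[nV P]}.

(* The variable x_v (v is expected to lie in V(P); 0 otherwise). *)
Definition xvar (K : fieldType) (P : seq pt) (v : pt) : {mpoly K[nV P]} :=
  match insub (index v (VP P)) with
  | Some i => 'X_i
  | None => 0
  end.

Definition vert_of (P : seq pt) (i : 'I_(nV P)) : pt := nth (0, 0) (VP P) i.

Definition inner_interval (P : seq pt) (a b : pt) : Prop :=
  (a.1 < b.1) /\ (a.2 < b.2) /\
  forall v : pt, a.1 <= v.1 -> v.1 < b.1 -> a.2 <= v.2 -> v.2 < b.2 -> v \in P.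

Definition ul_corner (a b : pt) : pt := (a.1, b.2).
Definition lr_corner (a b : pt) : pt := (b.1, a.2).

Definition fminor (K : fieldType) (P : seq pt) (a b : pt) : {mpoly K[nV P]} :=
  xvar K P a * xvar K P b - xvar K P (ul_corner a b) * xvar K P (lr_corner a b).

Definition inG (K : fieldType) (P : seq pt) (g : {mpoly K[nV P]}) : Prop :=
  exists a b : pt, inner_interval P a b /\ g = @fminor K P a b.

Definition P_order (P : seq pt) (po : rel pt) : Prop :=
  {in VP P, forall u, ~~ po u u} /\
  {in VP P & &, forall u v w, po u v -> po v w -> po u w} /\
  {in VP P &, forall u v, u != v -> po u v || po v u}.

(* Lexicographic order on monomials induced by the variable order x_u < x_v
   iff u <P v: m1 < m2 iff for the largest variable where they differ, the
   exponent in m2 is larger. *)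
Definition lex_lt (P : seq pt) (po : rel pt) (m1 m2 : 'X_{1..nV P}) : bool :=
  [exists i : 'I_(nV P),
     (m1 i < m2 i)%N &&
     [forall j : 'I_(nV P), po (@vert_of P i) (@vert_of P j) ==> (m1 j == m2 j)]].

Definition lex_le (P : seq pt) (po : rel pt) (m1 m2 : 'X_{1..nV P}) : bool :=
  (m1 == m2) || lex_lt po m1 m2.

(* initial (leading) monomial in_<(f) w.r.t. the lex order (the maximum of
   the support; 0 for f = 0) *)
Definition lmon (K : fieldType) (P : seq pt) (po : rel pt)
    (f : {mpoly K[nV P]}) : 'X_{1..nV P} :=
  foldr (fun m acc => if lex_le po acc m then m else acc) 0%MM (msupp f).

Definition lcoef (K : fieldType) (P : seq pt) (po : rel pt)
    (f : {mpoly K[nV P]}) : K := f@_(lmon po f).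

Definition mlcm (n : nat) (m1 m2 : 'X_{1..n}) : 'X_{1..n} :=
  [multinom maxn (m1 i) (m2 i) | i < n].

Definition spoly (K : fieldType) (P : seq pt) (po : rel pt)
    (f g : {mpoly K[nV P]}) : {mpoly K[nV P]} :=
  let w := mlcm (lmon po f) (lmon po g) in
  (lcoef po f)^-1 *: ('X_[w - lmon po f] * f)
  - (lcoef po g)^-1 *: ('X_[w - lmon po g] * g).

Definition init_le (K : fieldType) (P : seq pt) (po : rel pt)
    (h f : {mpoly K[nV P]}) : Prop :=
  h = 0 \/ (f != 0 /\ lex_le po (lmon po h) (lmon po f)).

(* f reduces to 0 modulo G (Herzog--Hibi): f has a standard expression
   f = sum_i u_i g_i with g_i in G and in(u_i g_i) <= in(f) for all i. *)
Definition reduces_to_zero (K : fieldType) (P : seq pt) (po : rel pt)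
    (f : {mpoly K[nV P]}) : Prop :=
  exists s : seq ({mpoly K[nV P]} * {mpoly K[nV P]}),
    (forall p, p \in s -> @inG K P p.2) /\
    f = \sum_(p <- s) p.1 * p.2 /\
    (forall p, p \in s -> init_le po (p.1 * p.2) f).

(* Main.v *)
Require Import Defs.
From HB Require Import structures.
From mathcomp Require Import all_boot all_order all_algebra.
From mathcomp Require Import mpoly.
From mathcomp Require Import ring zify.
Set Implicit Arguments. Unset Strict Implicit. Unset Printing Implicit Defensive.
Import Order.TTheory GRing.Theory Num.Theory.
Local Open Scope ring_scope.
Lemma vert_in P (i : 'I_(nV P)) : vert_of i \in VP P.
Proof. by rewrite /vert_of mem_nth. Qed.

Lemma vert_inj P : injective (@vert_of P).
Proof.
move=> i j /eqP; rewrite /vert_of nth_uniq ?undup_uniq //.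
by move/eqP/val_inj.
Qed.

Lemma lexlt_trans P po : P_order P po -> forall m1 m2 m3 : 'X_{1..nV P},
  lex_lt po m1 m2 -> lex_lt po m2 m3 -> lex_lt po m1 m3.
Proof.
case=> irr [tr tot] m1 m2 m3 /existsP[i /andP[lt1 /forallP f1]]
  /existsP[j /andP[lt2 /forallP f2]].
have trv (x y z : 'I_(nV P)) : po (vert_of x) (vert_of y) -> po (vert_of y) (vert_of z) ->
   po (vert_of x) (vert_of z).
  by move=> h1 h2; exact: (tr _ _ _ (vert_in x) (vert_in y) (vert_in z) h1 h2).
apply/existsP.
case: (eqVneq i j) => [eij|nij].
- subst j; exists i; rewrite (ltn_trans lt1 lt2) /=; apply/forallP=> k.
  apply/implyP=> h.
  by rewrite (eqP (implyP (f1 k) h)) (eqP (implyP (f2 k) h)).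
- have := tot _ _ (vert_in i) (vert_in j).
  rewrite (inj_eq (@vert_inj P)) nij => /(_ isT) /orP[pij|pji].
  + exists j; have e: m1 j = m2 j by apply/eqP/(implyP (f1 j)).
    rewrite e lt2 /=; apply/forallP=> k; apply/implyP=> h.
    by rewrite (eqP (implyP (f1 k) (trv _ _ _ pij h))) (eqP (implyP (f2 k) h)).
  + exists i; have e: m2 i = m3 i by apply/eqP/(implyP (f2 i)).
    rewrite -e lt1 /=; apply/forallP=> k; apply/implyP=> h.
    by rewrite (eqP (implyP (f1 k) h)) (eqP (implyP (f2 k) (trv _ _ _ pji h))).
Qed.

Lemma lexlt_irr P po (m : 'X_{1..nV P}) : ~~ lex_lt po m m.
Proof. by apply/existsP=> -[i /andP[]]; rewrite ltnn. Qed.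

Lemma lex_total P po : P_order P po -> forall m1 m2 : 'X_{1..nV P},
  m1 != m2 -> lex_lt po m1 m2 || lex_lt po m2 m1.
Proof.
case=> irr [tr tot] m1 m2 ne.
have trv (x y z : 'I_(nV P)) : po (vert_of x) (vert_of y) -> po (vert_of y) (vert_of z) ->
   po (vert_of x) (vert_of z).
  by move=> h1 h2; exact: (tr _ _ _ (vert_in x) (vert_in y) (vert_in z) h1 h2).
have [i0 Di0] : exists i, m1 i != m2 i.
  case/boolP: [exists i, m1 i != m2 i] => [/existsP[i hi]|/existsPn h].
    by exists i.
  by case/eqP: ne; apply/mnmP=> i; apply/eqP/negPn/h.
pose cnt (i : 'I_(nV P)) := #|[pred k | (m1 k != m2 k) && po (vert_of k) (vert_of i)]|.
case: (@arg_maxnP _ i0 [pred i | m1 i != m2 i] cnt Di0) => i /= Di imax.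
have maxi : forall j, m1 j != m2 j -> ~~ po (vert_of i) (vert_of j).
  move=> j Dj; apply/negP=> pij.
  have : (cnt i < cnt j)%N.
    apply: proper_card; apply/properP; split.
      apply/subsetP=> k; rewrite !inE => /andP[-> pki]; exact: trv pki pij.
    exists i; first by rewrite inE Di pij.
    by rewrite inE (negbTE (irr _ (vert_in i))) andbF.
  by rewrite ltnNge (imax j Dj).
have eqj : forall j, po (vert_of i) (vert_of j) -> m1 j == m2 j.
  by move=> j pij; apply/negPn/negP => Dj; move: (maxi j Dj); rewrite pij.
move: Di; rewrite /= neq_ltn => /orP[lt|lt]; apply/orP; [left|right];
  apply/existsP; exists i; rewrite lt /=; apply/forallP=> j; apply/implyP=> pij.
  exact: eqj.
by rewrite eq_sym; exact: eqj.
Qed.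

Lemma lexle_refl P po (m : 'X_{1..nV P}) : lex_le po m m.
Proof. by rewrite /lex_le eqxx. Qed.

Lemma lexle_trans P po : P_order P po -> forall m1 m2 m3 : 'X_{1..nV P},
  lex_le po m1 m2 -> lex_le po m2 m3 -> lex_le po m1 m3.
Proof.
move=> hP m1 m2 m3 /orP[/eqP->//|h1] /orP[/eqP<-|h2]; rewrite /lex_le ?h1 ?orbT //.
by rewrite (lexlt_trans hP h1 h2) orbT.
Qed.

Lemma lexle_anti P po : P_order P po -> forall m1 m2 : 'X_{1..nV P},
  lex_le po m1 m2 -> lex_le po m2 m1 -> m1 = m2.
Proof.
move=> hP m1 m2 /orP[/eqP->//|h1] /orP[/eqP->//|h2].
by move: (lexlt_irr po m1); rewrite (lexlt_trans hP h1 h2).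
Qed.

Lemma lexle_total P po : P_order P po -> forall m1 m2 : 'X_{1..nV P},
  lex_le po m1 m2 || lex_le po m2 m1.
Proof.
move=> hP m1 m2; case: (eqVneq m1 m2) => [->|ne]; first by rewrite lexle_refl.
by case/orP: (lex_total hP ne) => h; rewrite /lex_le h ?orbT.
Qed.

Lemma lex0 P po : P_order P po -> forall m : 'X_{1..nV P}, lex_le po 0%MM m.
Proof.
move=> hP m; case: (eqVneq 0%MM m) => [->|ne]; first exact: lexle_refl.
case/orP: (lex_total hP ne) => h; first by rewrite /lex_le h orbT.
by case/existsP: h => i /andP[]; rewrite mnm0E ltn0.
Qed.

Lemma lexlt_addr P po (m1 m2 m : 'X_{1..nV P}) :
  lex_lt po m1 m2 -> lex_lt po (m1 + m)%MM (m2 + m)%MM.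
Proof.
case/existsP=> i /andP[lt /forallP f]; apply/existsP; exists i.
rewrite !mnmDE ltn_add2r lt /=; apply/forallP=> j; apply/implyP=> h.
by rewrite !mnmDE eqn_add2r (implyP (f j) h).
Qed.

Lemma lmon_spec (K : fieldType) P po (f : {mpoly K[nV P]}) : P_order P po ->
  (msupp f != [::] -> lmon po f \in msupp f) /\
  (forall m, m \in msupp f -> lex_le po m (lmon po f)).
Proof.
move=> hP; rewrite /lmon; elim: (msupp f) => [|x s [IH1 IH2]] //=.
set r := foldr _ _ s.
case: ifP => hle.
- split; first by rewrite inE eqxx.
  move=> m; rewrite inE => /orP[/eqP->|ms]; first exact: lexle_refl.
  have h := lexle_trans hP (IH2 _ ms) hle. exact h.
- have sne : s != [::].
    by apply: contraFN hle => /eqP se; rewrite /r se /= lex0.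
  have xr : lex_le po x r.
    by case/orP: (lexle_total hP r x) => //; rewrite hle.
  split; first by rewrite inE (IH1 sne) orbT.
  move=> m; rewrite inE => /orP[/eqP->|ms]; [exact xr | exact: IH2].
Qed.

Lemma lmon_char (K : fieldType) P po (f : {mpoly K[nV P]}) m0 : P_order P po ->
  m0 \in msupp f -> (forall m, m \in msupp f -> lex_le po m m0) -> lmon po f = m0.
Proof.
move=> hP m0f hm; have [h1 h2] := lmon_spec f hP.
have ne : msupp f != [::] by apply/eqP=> e; rewrite e in m0f.
have h := lexle_anti hP (hm _ (h1 ne)) (h2 _ m0f); exact h.
Qed.

Lemma lmon_bin (K : fieldType) P po (c : K) (L T : 'X_{1..nV P}) :
  P_order P po -> c != 0 -> lex_lt po T L ->
  lmon po (c *: ('X_[L] - 'X_[T])) = L /\ lcoef po (c *: ('X_[L] - 'X_[T])) = c.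
Proof.
move=> hP c0 lt.
have LT : L != T by apply/eqP => e; move: lt; rewrite e; apply/negP/lexlt_irr.
have TL : (T == L) = false by rewrite eq_sym (negbTE LT).
have co m : (c *: ('X_[L] - 'X_[T]))@_m = c * ((L == m)%:R - (T == m)%:R).
  by rewrite mcoeffZ mcoeffB !mcoeffX.
have lm : lmon po (c *: ('X_[L] - 'X_[T])) = L.
  apply: lmon_char => //.
    by rewrite mcoeff_msupp co eqxx TL subr0 mulr1.
  move=> m; rewrite mcoeff_msupp co.
  case: (eqVneq L m) => [<- _|nL]; first exact: lexle_refl.
  case: (eqVneq T m) => [<- _|nT]; first by rewrite /lex_le lt orbT.
  by rewrite subrr mulr0 eqxx.
split=> //; rewrite /lcoef lm co eqxx TL subr0 mulr1 //.
Qed.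

Lemma lmon_bin2 (K : fieldType) P po (A B : 'X_{1..nV P}) :
  P_order P po -> A != B ->
  lex_le po A (lmon po ('X_[A] - 'X_[B] : {mpoly K[nV P]})) /\
  lex_le po B (lmon po ('X_[A] - 'X_[B] : {mpoly K[nV P]})).
Proof.
move=> hP AB; case/orP: (lex_total hP AB) => lt.
- have -> : ('X_[A] - 'X_[B] : {mpoly K[nV P]}) = (-1) *: ('X_[B] - 'X_[A]).
    by rewrite scaleN1r opprB.
  have n1 : (-1 : K) != 0 by rewrite oppr_eq0 oner_neq0.
  have [-> _] := @lmon_bin K P po (-1) B A hP n1 lt.
  by rewrite /lex_le lt orbT eqxx.
- have -> : ('X_[A] - 'X_[B] : {mpoly K[nV P]}) = 1 *: ('X_[A] - 'X_[B]).
    by rewrite scale1r.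
  have [-> _] := @lmon_bin K P po 1 A B hP (oner_neq0 _) lt.
  by rewrite /lex_le lt orbT eqxx.
Qed.

Lemma le_mlcm n (m1 m2 : 'X_{1..n}) : (m1 <= mlcm m1 m2)%MM /\ (m2 <= mlcm m1 m2)%MM.
Proof. by split; apply/mnm_lepP=> i; rewrite /mlcm mnmE ?leq_maxl ?leq_maxr. Qed.

Lemma spoly_bin (K : fieldType) P po (f g : {mpoly K[nV P]}) c1 c2 L1 T1 L2 T2 :
  P_order P po -> c1 != 0 -> c2 != 0 -> lex_lt po T1 L1 -> lex_lt po T2 L2 ->
  f = c1 *: ('X_[L1] - 'X_[T1]) -> g = c2 *: ('X_[L2] - 'X_[T2]) ->
  spoly po f g = 'X_[mlcm L1 L2 - L2 + T2] - 'X_[mlcm L1 L2 - L1 + T1].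
Proof.
move=> hP n1 n2 l1 l2 -> ->.
have [lm1 lc1] := lmon_bin hP n1 l1; have [lm2 lc2] := lmon_bin hP n2 l2.
rewrite /spoly lm1 lc1 lm2 lc2.
have [le1 le2] := le_mlcm L1 L2.
rewrite -!scalerAr !scalerA !mulVf // !scale1r !mulrBr -!mpolyXD !submK //.
ring.
Qed.

Lemma coprime_case (K : fieldType) P po (f g : {mpoly K[nV P]}) c1 c2 L1 T1 L2 T2 :
  P_order P po -> c1 != 0 -> c2 != 0 -> lex_lt po T1 L1 -> lex_lt po T2 L2 ->
  f = c1 *: ('X_[L1] - 'X_[T1]) -> g = c2 *: ('X_[L2] - 'X_[T2]) ->
  inG f -> inG g -> mlcm L1 L2 = (L1 + L2)%MM ->
  reduces_to_zero po (spoly po f g).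
Proof.
move=> hP n1 n2 l1 l2 ef eg Gf Gg hw.
rewrite (spoly_bin hP n1 n2 l1 l2 ef eg) hw addmK [(L1 + L2)%MM]addmC addmK.
set S := _ - _.
case: (eqVneq S 0) => [->|S0].
  by exists [::]; split=> //; rewrite big_nil.
have AB : (L1 + T2 != L2 + T1)%MM.
  by apply: contraNneq S0 => e; rewrite /S e subrr.
have [bA bB] := lmon_bin2 K hP AB.
have p1 : c1^-1 *: 'X_[T2] * f = 1 *: ('X_[L1 + T2] - 'X_[T1 + T2]).
  rewrite ef -scalerAl -scalerAr scalerA mulVf // !scale1r !mpolyXD; ring.
have p2 : - c2^-1 *: 'X_[T1] * g = -1 *: ('X_[L2 + T1] - 'X_[T2 + T1]).
  rewrite eg -scalerAl -scalerAr scalerA mulNr mulVf // !scaleN1r !mpolyXD; ring.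
exists [:: (c1^-1 *: 'X_[T2], f); (- c2^-1 *: 'X_[T1], g)]; split; [|split].
- by move=> p; rewrite !inE => /orP[/eqP->|/eqP->].
- rewrite big_cons big_cons big_nil addr0 /= p1 p2 scale1r scaleN1r /S !mpolyXD.
  ring.
- move=> p; rewrite !inE => /orP[/eqP->|/eqP->] /=; right; split => //.
    rewrite p1; have [-> _] := lmon_bin hP (oner_neq0 K) (lexlt_addr T2 l1).
    exact: bA.
  have n1' : (-1 : K) != 0 by rewrite oppr_eq0 oner_neq0.
  rewrite p2; have [-> _] := lmon_bin hP n1' (lexlt_addr T1 l2).
  exact: bB.
Qed.

Lemma common_case (K : fieldType) P po (f g h : {mpoly K[nV P]}) c1 c2 e L1 T1 L2 T2 M A B :
  P_order P po -> c1 != 0 -> c2 != 0 -> lex_lt po T1 L1 -> lex_lt po T2 L2 ->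
  f = c1 *: ('X_[L1] - 'X_[T1]) -> g = c2 *: ('X_[L2] - 'X_[T2]) ->
  (mlcm L1 L2 - L2 + T2 = M + A)%MM -> (mlcm L1 L2 - L1 + T1 = M + B)%MM ->
  e != 0 -> inG h -> h = e *: ('X_[A] - 'X_[B]) -> reduces_to_zero po (spoly po f g).
Proof.
move=> hP n1 n2 l1 l2 ef eg w1 w2 ne Gh eh.
rewrite (spoly_bin hP n1 n2 l1 l2 ef eg) w1 w2.
have E : 'X_[M + A] - 'X_[M + B] = e^-1 *: 'X_[M] * h.
  by rewrite eh -scalerAl -scalerAr scalerA mulVf // scale1r mulrBr -!mpolyXD.
exists [:: (e^-1 *: 'X_[M], h)]; split; [|split].
- by move=> p; rewrite inE => /eqP->.
- by rewrite big_cons big_nil addr0 E.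
- move=> p; rewrite inE => /eqP-> /=; rewrite E.
  case: (eqVneq (e^-1 *: 'X_[M] * h) 0) => [->|nz]; first by left.
  by right; split=> //; exact: lexle_refl.
Qed.

Ltac cnt_cases U k :=
  let B := fresh "B" in
  have B := leq_trans (eq_leq (count_uniq_mem k U)) (leq_b1 _);
  rewrite /= ?eqxx in B; move: B; rewrite ?eqxx;
  repeat match goal with |- context[(?x == k)] => case: (x == k) end; done.

Lemma six_idx (K : fieldType) P po (s t u1 u2 w1 w2 : 'I_(nV P)) (ef eg eh : K)
  (f g : {mpoly K[nV P]}) :
  P_order P po -> uniq [:: s; t; u1; u2; w1; w2] -> ef != 0 -> eg != 0 -> eh != 0 ->
  f = ef *: ('X_t * 'X_u1 - 'X_s * 'X_u2) -> g = eg *: ('X_s * 'X_w2 - 'X_t * 'X_w1) ->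
  inG f -> inG g -> inG (eh *: ('X_u1 * 'X_w2 - 'X_u2 * 'X_w1)) ->
  reduces_to_zero po (spoly po f g).
Proof.
move=> hP U nf ng nh Ef Eg Gf Gg Gh.
rewrite -!mpolyXD in Ef Eg Gh.
have nf' : - ef != 0 by rewrite oppr_eq0.
have ng' : - eg != 0 by rewrite oppr_eq0.
have nh' : - eh != 0 by rewrite oppr_eq0.
have Ef' : f = - ef *: ('X_[U_(s) + U_(u2)] - 'X_[U_(t) + U_(u1)]).
  by rewrite Ef scaleNr -scalerN opprB.
have Eg' : g = - eg *: ('X_[U_(t) + U_(w1)] - 'X_[U_(s) + U_(w2)]).
  by rewrite Eg scaleNr -scalerN opprB.
have Fne : (U_(t) + U_(u1) != U_(s) + U_(u2))%MM.
  by apply/eqP => /mnmP/(_ t); rewrite !mnmDE !mnm1E; cnt_cases U t.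
have Gne : (U_(s) + U_(w2) != U_(t) + U_(w1))%MM.
  by apply/eqP => /mnmP/(_ s); rewrite !mnmDE !mnm1E; cnt_cases U s.
case/orP: (lex_total hP Fne) => lf; case/orP: (lex_total hP Gne) => lg.
-
  apply: (coprime_case hP nf' ng' lf lg Ef' Eg' Gf Gg).
  by apply/mnmP => k; rewrite /mlcm !(mnmE, mnmDE, mnmBE, mnm1E); cnt_cases U k.
-
  apply: (common_case (M := U_(t)%MM) (A := (U_(u2) + U_(w1))%MM)
     (B := (U_(u1) + U_(w2))%MM) hP nf' ng lf lg Ef' Eg _ _ nh' Gh).
  + by apply/mnmP => k; rewrite /mlcm !(mnmE, mnmDE, mnmBE, mnm1E); cnt_cases U k.
  + by apply/mnmP => k; rewrite /mlcm !(mnmE, mnmDE, mnmBE, mnm1E); cnt_cases U k.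
  + by rewrite scaleNr -scalerN opprB.
-
  apply: (common_case (M := U_(s)%MM) (A := (U_(u1) + U_(w2))%MM)
     (B := (U_(u2) + U_(w1))%MM) hP nf ng' lf lg Ef Eg' _ _ nh Gh).
  + by apply/mnmP => k; rewrite /mlcm !(mnmE, mnmDE, mnmBE, mnm1E); cnt_cases U k.
  + by apply/mnmP => k; rewrite /mlcm !(mnmE, mnmDE, mnmBE, mnm1E); cnt_cases U k.
  + by [].
- apply: (coprime_case hP nf ng lf lg Ef Eg Gf Gg).
  by apply/mnmP => k; rewrite /mlcm !(mnmE, mnmDE, mnmBE, mnm1E); cnt_cases U k.
Qed.

Lemma xvarE (K : fieldType) P v : v \in VP P ->
  exists i : 'I_(nV P), vert_of i = v /\ xvar K P v = 'X_i.
Proof.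
move=> vin; rewrite /xvar.
have hi : (index v (VP P) < nV P)%N by rewrite index_mem.
case: insubP => [i _ ei|]; last by rewrite hi.
by exists i; rewrite /vert_of ei nth_index.
Qed.

Lemma six_pt (K : fieldType) P po (s t u1 u2 w1 w2 : pt) (ef eg eh : K)
  (f g : {mpoly K[nV P]}) :
  P_order P po -> all (mem (VP P)) [:: s; t; u1; u2; w1; w2] ->
  uniq [:: s; t; u1; u2; w1; w2] -> ef != 0 -> eg != 0 -> eh != 0 ->
  f = ef *: (xvar K P t * xvar K P u1 - xvar K P s * xvar K P u2) ->
  g = eg *: (xvar K P s * xvar K P w2 - xvar K P t * xvar K P w1) ->
  inG f -> inG g ->
  inG (eh *: (xvar K P u1 * xvar K P w2 - xvar K P u2 * xvar K P w1)) ->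
  reduces_to_zero po (spoly po f g).
Proof.
move=> hP; rewrite /= andbT => /and5P[vs vt vu1 vu2 /andP[vw1 vw2]] U nf ng nh Ef Eg Gf Gg Gh.
have [iS [es xs]] := xvarE K vs; have [it [et xt]] := xvarE K vt.
have [iu1 [eu1 xu1]] := xvarE K vu1; have [iu2 [eu2 xu2]] := xvarE K vu2.
have [iw1 [ew1 xw1]] := xvarE K vw1; have [iw2 [ew2 xw2]] := xvarE K vw2.
rewrite xs xt xu1 xu2 xw1 xw2 in Ef Eg Gh.
have U' : uniq [:: iS; it; iu1; iu2; iw1; iw2].
  apply: (@map_uniq _ _ (@vert_of P)).
  by rewrite /= es et eu1 eu2 ew1 ew2.
exact: (six_idx hP U' nf ng nh Ef Eg Gf Gg Gh).
Qed.

Lemma cellv_VP P v w : v \in P -> w \in cell_vertices v -> w \in VP P.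
Proof.
move=> vP wv; rewrite /VP mem_undup; apply/flattenP.
by exists (cell_vertices v) => //; exact: map_f.
Qed.

Lemma corner_VP P (lo hi : pt) (x y : int) : inner_interval P lo hi ->
  (x == lo.1) || (x == hi.1) -> (y == lo.2) || (y == hi.2) -> (x, y) \in VP P.
Proof.
case: lo hi => l1 l2 [h1 h2] [/= lt1 [lt2 R]].
case/orP => /eqP->; case/orP => /eqP->.
- apply: (@cellv_VP _ (l1, l2)); first by apply: R => /=; lia.
  by rewrite /cell_vertices !inE eqxx.
- apply: (@cellv_VP _ (l1, h2 - 1)); first by apply: R => /=; lia.
  by rewrite /cell_vertices !inE /= subrK eqxx ?orbT.
- apply: (@cellv_VP _ (h1 - 1, l2)); first by apply: R => /=; lia.
  by rewrite /cell_vertices !inE /= subrK eqxx ?orbT.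
- apply: (@cellv_VP _ (h1 - 1, h2 - 1)); first by apply: R => /=; lia.
  by rewrite /cell_vertices !inE /= !subrK eqxx ?orbT.
Qed.

Lemma mm_l (x y : int) : (x == Num.min x y) || (x == Num.max x y).
Proof. apply/orP; lia. Qed.
Lemma mm_r (x y : int) : (y == Num.min x y) || (y == Num.max x y).
Proof. apply/orP; lia. Qed.

Lemma horiz (K : fieldType) P po (i k e yf yg : int) (f g : {mpoly K[nV P]}) :
  P_order P po -> i < k -> yf != e -> yg != e -> yf != yg ->
  inner_interval P (i, Num.min e yf) (k, Num.max e yf) ->
  inner_interval P (i, Num.min e yg) (k, Num.max e yg) ->
  inG f -> inG g ->
  (let F0 := xvar K P (k, e) * xvar K P (i, yf) - xvar K P (i, e) * xvar K P (k, yf) in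
   f = F0 \/ f = - F0) ->
  (let G0 := xvar K P (i, e) * xvar K P (k, yg) - xvar K P (k, e) * xvar K P (i, yg) in
   g = G0 \/ g = - G0) ->
  reduces_to_zero po (spoly po f g).
Proof.
move=> hP ik nfe nge nfg If Ig Gf Gg /= hf hg.
have n1 : (1 : K) != 0 by apply: oner_neq0.
have n1' : (-1 : K) != 0 by rewrite oppr_eq0.
have [ef [nef Ef]] : exists ef : K, ef != 0 /\
   f = ef *: (xvar K P (k, e) * xvar K P (i, yf) - xvar K P (i, e) * xvar K P (k, yf)).
  by case: hf => ->; [exists 1; rewrite scale1r | exists (-1); rewrite scaleN1r].
have [eg [neg Eg]] : exists eg : K, eg != 0 /\
   g = eg *: (xvar K P (i, e) * xvar K P (k, yg) - xvar K P (k, e) * xvar K P (i, yg)).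
  by case: hg => ->; [exists 1; rewrite scale1r | exists (-1); rewrite scaleN1r].
have [Rf1 [Rf2 Rf]] := If; have [Rg1 [Rg2 Rg]] := Ig.
have Rh : forall v : pt, i <= v.1 -> v.1 < k -> Num.min yf yg <= v.2 ->
    v.2 < Num.max yf yg -> v \in P.
  move=> v h1 h2 h3 h4.
  case: (boolP ((Num.min e yf <= v.2) && (v.2 < Num.max e yf))) => /= hv.
    by case/andP: hv => ? ?; apply: Rf.
  by apply: Rg => /=; lia.
have [eh [neh Gh]] : exists eh : K, eh != 0 /\ inG (eh *: (xvar K P (i, yf) *
     xvar K P (k, yg) - xvar K P (k, yf) * xvar K P (i, yg))).
  case: (ltgtP yf yg) => [lt|lt|eq]; last by rewrite eq eqxx in nfg.
  - exists 1; split=> //; exists (i, yf), (k, yg); split.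
      by split=> //; split=> //= v h1 h2 h3 h4; apply: Rh => //; lia.
    by rewrite scale1r /fminor /ul_corner /lr_corner /=; ring.
  - exists (-1); split=> //; exists (i, yg), (k, yf); split.
      by split=> //; split=> //= v h1 h2 h3 h4; apply: Rh => //; lia.
    by rewrite scaleN1r /fminor /ul_corner /lr_corner /=; ring.
apply: (six_pt (s := (i, e)) (t := (k, e)) (u1 := (i, yf)) (u2 := (k, yf))
   (w1 := (i, yg)) (w2 := (k, yg)) hP _ _ nef neg neh Ef Eg Gf Gg Gh).
- have cf x y := @corner_VP P _ _ x y If; have cg x y := @corner_VP P _ _ x y Ig.
  rewrite /= (cf i e) ?(cf k e) ?(cf i yf) ?(cf k yf) ?(cg i yg) ?(cg k yg) //=;
  by rewrite ?eqxx ?orbT ?mm_l ?mm_r.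
- rewrite /= !inE !xpair_eqE; lia.
Qed.

Lemma vert (K : fieldType) P po (j l e xf xg : int) (f g : {mpoly K[nV P]}) :
  P_order P po -> j < l -> xf != e -> xg != e -> xf != xg ->
  inner_interval P (Num.min e xf, j) (Num.max e xf, l) ->
  inner_interval P (Num.min e xg, j) (Num.max e xg, l) ->
  inG f -> inG g ->
  (let F0 := xvar K P (e, l) * xvar K P (xf, j) - xvar K P (e, j) * xvar K P (xf, l) in
   f = F0 \/ f = - F0) ->
  (let G0 := xvar K P (e, j) * xvar K P (xg, l) - xvar K P (e, l) * xvar K P (xg, j) in
   g = G0 \/ g = - G0) ->
  reduces_to_zero po (spoly po f g).
Proof.
move=> hP jl nfe nge nfg If Ig Gf Gg /= hf hg.
have n1 : (1 : K) != 0 by apply: oner_neq0.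
have n1' : (-1 : K) != 0 by rewrite oppr_eq0.
have [ef [nef Ef]] : exists ef : K, ef != 0 /\
   f = ef *: (xvar K P (e, l) * xvar K P (xf, j) - xvar K P (e, j) * xvar K P (xf, l)).
  by case: hf => ->; [exists 1; rewrite scale1r | exists (-1); rewrite scaleN1r].
have [eg [neg Eg]] : exists eg : K, eg != 0 /\
   g = eg *: (xvar K P (e, j) * xvar K P (xg, l) - xvar K P (e, l) * xvar K P (xg, j)).
  by case: hg => ->; [exists 1; rewrite scale1r | exists (-1); rewrite scaleN1r].
have [Rf1 [Rf2 Rf]] := If; have [Rg1 [Rg2 Rg]] := Ig.
have Rh : forall v : pt, Num.min xf xg <= v.1 -> v.1 < Num.max xf xg ->
    j <= v.2 -> v.2 < l -> v \in P.
  move=> v h1 h2 h3 h4.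
  case: (boolP ((Num.min e xf <= v.1) && (v.1 < Num.max e xf))) => /= hv.
    by case/andP: hv => ? ?; apply: Rf.
  by apply: Rg => /=; lia.
have [eh [neh Gh]] : exists eh : K, eh != 0 /\ inG (eh *: (xvar K P (xf, j) *
     xvar K P (xg, l) - xvar K P (xf, l) * xvar K P (xg, j))).
  case: (ltgtP xf xg) => [lt|lt|eq]; last by rewrite eq eqxx in nfg.
  - exists 1; split=> //; exists (xf, j), (xg, l); split.
      by split=> //; split=> //= v h1 h2 h3 h4; apply: Rh => //; lia.
    by rewrite scale1r /fminor /ul_corner /lr_corner /=; ring.
  - exists (-1); split=> //; exists (xg, j), (xf, l); split.
      by split=> //; split=> //= v h1 h2 h3 h4; apply: Rh => //; lia.
    by rewrite scaleN1r /fminor /ul_corner /lr_corner /=; ring.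
apply: (six_pt (s := (e, j)) (t := (e, l)) (u1 := (xf, j)) (u2 := (xf, l))
   (w1 := (xg, j)) (w2 := (xg, l)) hP _ _ nef neg neh Ef Eg Gf Gg Gh).
- have cf x y := @corner_VP P _ _ x y If; have cg x y := @corner_VP P _ _ x y Ig.
  rewrite /= (cf e j) ?(cf e l) ?(cf xf j) ?(cf xf l) ?(cg xg j) ?(cg xg l) //=;
  by rewrite ?eqxx ?orbT ?mm_l ?mm_r.
- rewrite /= !inE !xpair_eqE; lia.
Qed.

Lemma memQ (x al be : pt) : x \in [:: al; be; ul_corner al be; lr_corner al be] =
  ((x.1 == al.1) || (x.1 == be.1)) && ((x.2 == al.2) || (x.2 == be.2)).
Proof.
case: x al be => x1 x2 [a1 a2] [b1 b2]; rewrite /ul_corner /lr_corner !inE !xpair_eqE /=.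
by case: (x1 == a1); case: (x1 == b1); case: (x2 == a2); case: (x2 == b2).
Qed.

Lemma cnt2 (X1 X2 Y1 Y2 : bool) :
  ((X1 && Y1) + ((X2 && Y2) + ((X1 && Y2) + ((X2 && Y1) + 0))))%N = 2%N ->
  (X1 && X2 && (Y1 != Y2)) || (Y1 && Y2 && (X1 != X2)).
Proof. by case: X1; case: X2; case: Y1; case: Y2. Qed.

Lemma inner_mmY P (x1 y1 x2 y2 y y' : int) : inner_interval P (x1, y1) (x2, y2) ->
  Num.min y y' = y1 -> Num.max y y' = y2 ->
  inner_interval P (x1, Num.min y y') (x2, Num.max y y').
Proof. by move=> h -> ->. Qed.

Lemma inner_mmX P (x1 y1 x2 y2 x x' : int) : inner_interval P (x1, y1) (x2, y2) ->
  Num.min x x' = x1 -> Num.max x x' = x2 ->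
  inner_interval P (Num.min x x', y1) (Num.max x x', y2).
Proof. by move=> h -> ->. Qed.

Theorem mainTheorem1 (K : fieldType) (P : seq pt) (a b alpha beta : pt) :
  P != [::] ->
  inner_interval P a b ->
  inner_interval P alpha beta ->
  size (undup [seq x <- [:: a; b; ul_corner a b; lr_corner a b]
                 | x \in [:: alpha; beta; ul_corner alpha beta;
                             lr_corner alpha beta]]) = 2%N ->
  forall po : rel pt, P_order P po ->
    reduces_to_zero po (spoly po (fminor K P a b) (fminor K P alpha beta)).
Proof.
move=> _ Iab Ialbe Hs po hP.
have Gf : inG (fminor K P a b) by exists a, b.
have Gg : inG (fminor K P alpha beta) by exists alpha, beta.
move: Iab Ialbe Hs Gf Gg.
case: a b alpha beta => [a1 a2] [b1 b2] [p1 p2] [q1 q2] Iab Ialbe.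
have [ab1 [ab2 _]] := Iab; have [pq1 [pq2 _]] := Ialbe.
rewrite /= in ab1 ab2 pq1 pq2.
rewrite undup_id; last first.
  by apply: filter_uniq; rewrite /ul_corner /lr_corner /= !inE !xpair_eqE; lia.
rewrite size_filter /= !memQ /= => /cnt2 /orP[/andP[/andP[X1 X2] Yn]|/andP[/andP[Y1 Y2] Xn]] Gf Gg.
- have e1 : a1 = p1 by lia.
  have e2 : b1 = q1 by lia.
  subst a1 b1.
  have : [\/ a2 = p2 /\ b2 != q2, a2 = q2, b2 = p2 | b2 = q2 /\ a2 != p2].
    by move: Yn; case: (a2 =P p2) => ?; case: (a2 =P q2) => ?; case: (b2 =P p2) => ?; case: (b2 =P q2) => ?; move=> //= _;
    first [by constructor 1 | by constructor 2 | by constructor 3 | by constructor 4 | (exfalso; lia)].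
  case=> [[e n]|e|e|[e n]]; [subst p2|subst q2|subst p2|subst q2].
  + apply: (horiz (i:=p1) (k:=q1) (e:=a2) (yf:=b2) (yg:=q2) hP);
    first [ done | lia | (apply: (inner_mmY Iab); lia) | (apply: (inner_mmY Ialbe); lia)
          | (left; rewrite /fminor /=; ring) | (right; rewrite /fminor /=; ring) ].
  + apply: (horiz (i:=p1) (k:=q1) (e:=a2) (yf:=b2) (yg:=p2) hP);
    first [ done | lia | (apply: (inner_mmY Iab); lia) | (apply: (inner_mmY Ialbe); lia)
          | (left; rewrite /fminor /=; ring) | (right; rewrite /fminor /=; ring) ].
  + apply: (horiz (i:=p1) (k:=q1) (e:=b2) (yf:=a2) (yg:=q2) hP);
    first [ done | lia | (apply: (inner_mmY Iab); lia) | (apply: (inner_mmY Ialbe); lia)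
          | (left; rewrite /fminor /=; ring) | (right; rewrite /fminor /=; ring) ].
  + apply: (horiz (i:=p1) (k:=q1) (e:=b2) (yf:=a2) (yg:=p2) hP);
    first [ done | lia | (apply: (inner_mmY Iab); lia) | (apply: (inner_mmY Ialbe); lia)
          | (left; rewrite /fminor /=; ring) | (right; rewrite /fminor /=; ring) ].
- have e1 : a2 = p2 by lia.
  have e2 : b2 = q2 by lia.
  subst a2 b2.
  have : [\/ a1 = p1 /\ b1 != q1, a1 = q1, b1 = p1 | b1 = q1 /\ a1 != p1].
    by move: Xn; case: (a1 =P p1) => ?; case: (a1 =P q1) => ?; case: (b1 =P p1) => ?; case: (b1 =P q1) => ?; move=> //= _;
    first [by constructor 1 | by constructor 2 | by constructor 3 | by constructor 4 | (exfalso; lia)].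
  case=> [[e n]|e|e|[e n]]; [subst p1|subst q1|subst p1|subst q1].
  + apply: (vert (j:=p2) (l:=q2) (e:=a1) (xf:=b1) (xg:=q1) hP);
    first [ done | lia | (apply: (inner_mmX Iab); lia) | (apply: (inner_mmX Ialbe); lia)
          | (left; rewrite /fminor /=; ring) | (right; rewrite /fminor /=; ring) ].
  + apply: (vert (j:=p2) (l:=q2) (e:=a1) (xf:=b1) (xg:=p1) hP);
    first [ done | lia | (apply: (inner_mmX Iab); lia) | (apply: (inner_mmX Ialbe); lia)
          | (left; rewrite /fminor /=; ring) | (right; rewrite /fminor /=; ring) ].
  + apply: (vert (j:=p2) (l:=q2) (e:=b1) (xf:=a1) (xg:=q1) hP);
    first [ done | lia | (apply: (inner_mmX Iab); lia) | (apply: (inner_mmX Ialbe); lia)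
          | (left; rewrite /fminor /=; ring) | (right; rewrite /fminor /=; ring) ].
  + apply: (vert (j:=p2) (l:=q2) (e:=b1) (xf:=a1) (xg:=p1) hP);
    first [ done | lia | (apply: (inner_mmX Iab); lia) | (apply: (inner_mmX Ialbe); lia)
          | (left; rewrite /fminor /=; ring) | (right; rewrite /fminor /=; ring) ].
Qed.
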